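(* Let $S$ be an intra-regular $\Gamma$-AG$^{**}$-groupoid and $A\subseteq S$ nonempty. Then $A$ is a $\Gamma$-$(1,2)$-ideal of $S$ if and only if $(A\Gamma S)\Gamma (A\Gamma A)=A$ and $A\Gamma A=A$.
   Context: Let $S$ and $\Gamma$ be nonempty sets with a map $S\times\Gamma\times S\to S$, $(x,\gamma,y)\mapsto x\gamma y$. $S$ is a $\Gamma$-AG-groupoid if $(x\gamma y)\delta z=(z\gamma y)\delta x$ for all $x,y,z\in S$, $\gamma,\delta\in\Gamma$; it is a $\Gamma$-AG$^{**}$-groupoid if moreover $a\alpha(b\beta c)=b\alpha(a\beta c)$ for all $a,b,c\in S$, $\alpha,\beta\in\Gamma$. For subsets $A,B\subseteq S$, $A\Gamma B=\{a\gamma b: a\in A,\gamma\in\Gamma,b\in B\}$. $S$ is intra-regular if for every $a\in S$ there exist $x,y\in S$ and $\beta,\gamma,\delta\in\Gamma$ with $a=(x\beta(a\delta a))\gamma y$. A nonempty subset $A$ is a $\Gamma$-$(1,2)$-ideal if $A\Gamma A\subseteq A$ and $(A\Gamma S)\Gamma(A\Gamma A)\subseteq A$. *)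

(* Defs.v *)
From Stdlib Require Import Classical.

Definition subset {S : Type} (A B : S -> Prop) : Prop := forall x, A x -> B x.

Definition set_eq {S : Type} (A B : S -> Prop) : Prop := subset A B /\ subset B A.

Definition gprod {S G : Type} (op : S -> G -> S -> S) (A B : S -> Prop) : S -> Prop :=
  fun z => exists a g b, A a /\ B b /\ z = op a g b.

Definition fullset {S : Type} : S -> Prop := fun _ => True.

Definition is_GammaAG {S G : Type} (op : S -> G -> S -> S) : Prop :=
  forall (x y z : S) (g d : G), op (op x g y) d z = op (op z g y) d x.

Definition is_GammaAGss {S G : Type} (op : S -> G -> S -> S) : Prop :=
  is_GammaAG op /\
  forall (a b c : S) (al be : G), op a al (op b be c) = op b al (op a be c).

Definition intra_regular {S G : Type} (op : S -> G -> S -> S) : Prop :=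
  forall a : S, exists (x y : S) (be ga de : G),
    a = op (op x be (op a de a)) ga y.

Definition is_Gamma12_ideal {S G : Type} (op : S -> G -> S -> S) (A : S -> Prop) : Prop :=
  (exists a, A a) /\
  subset (gprod op A A) A /\
  subset (gprod op (gprod op A fullset) (gprod op A A)) A.

(* Main.v *)
Require Import Defs.

Lemma key_rep (S G : Type) (op : S -> G -> S -> S)
  (H1 : forall (x y z : S) (g d : G), op (op x g y) d z = op (op z g y) d x)
  (H2 : forall (a b c : S) (al be : G), op a al (op b be c) = op b al (op a be c))
  (Hir : intra_regular op) (a : S) :
  exists s d c e, a = op (op a d s) c (op a e a).
Proof.
  destruct (Hir a) as [x [y [b [c [d E]]]]].
  exists (op (op (op y b x) b x) c y), d, c, d.
  transitivity (op (op x b (op a d a)) c y); [exact E|].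
  transitivity (op (op x b (op a d (op (op x b (op a d a)) c y))) c y); [pose proof E as HH; congruence|].
  transitivity (op (op x b (op (op x b (op a d a)) d (op a c y))) c y); [pose proof (H2 a (op x b (op a d a)) y d c) as HH; congruence|].
  transitivity (op (op (op x b (op a d a)) b (op x d (op a c y))) c y); [pose proof (H2 x (op x b (op a d a)) (op a c y) b d) as HH; congruence|].
  transitivity (op (op (op (op x d (op a c y)) b (op a d a)) b x) c y); [pose proof (H1 x (op a d a) (op x d (op a c y)) b b) as HH; congruence|].
  transitivity (op (op y b x) c (op (op x d (op a c y)) b (op a d a))); [pose proof (H1 (op (op x d (op a c y)) b (op a d a)) x y b c) as HH; congruence|].
  transitivity (op (op y b x) c (op (op (op a d a) d (op a c y)) b x)); [pose proof (H1 x (op a c y) (op a d a) d b) as HH; congruence|].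
  transitivity (op (op (op a d a) d (op a c y)) c (op (op y b x) b x)); [pose proof (H2 (op y b x) (op (op a d a) d (op a c y)) x c b) as HH; congruence|].
  transitivity (op (op (op (op y b x) b x) d (op a c y)) c (op a d a)); [pose proof (H1 (op a d a) (op a c y) (op (op y b x) b x) d c) as HH; congruence|].
  transitivity (op (op a d (op (op (op y b x) b x) c y)) c (op a d a)); [pose proof (H2 (op (op y b x) b x) a y d c) as HH; congruence|].
  reflexivity.
Qed.

Lemma key_AA (S G : Type) (op : S -> G -> S -> S)
  (H1 : forall (x y z : S) (g d : G), op (op x g y) d z = op (op z g y) d x)
  (H2 : forall (a b c : S) (al be : G), op a al (op b be c) = op b al (op a be c))
  (a s : S) (d c e : G) (E : a = op (op a d s) c (op a e a)) :
  a = op (op (op a e (op s d s)) d (op a c (op a e a))) c a.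
Proof.
  transitivity (op (op a d s) c (op a e a)); [pose proof E as HH; congruence|].
  transitivity (op (op (op a e a) d s) c a); [pose proof (H1 a s (op a e a) d c) as HH; congruence|].
  transitivity (op (op (op (op (op a d s) c (op a e a)) e a) d s) c a); [pose proof E as HH; congruence|].
  transitivity (op (op (op (op a c (op a e a)) e (op a d s)) d s) c a); [pose proof (H1 (op a d s) (op a e a) a c e) as HH; congruence|].
  transitivity (op (op (op s e (op a d s)) d (op a c (op a e a))) c a); [pose proof (H1 (op a c (op a e a)) (op a d s) s e d) as HH; congruence|].
  transitivity (op (op (op a e (op s d s)) d (op a c (op a e a))) c a); [pose proof (H2 s a s e d) as HH; congruence|].
  reflexivity.
Qed.

Theorem mainTheorem6 (S G : Type) (op : S -> G -> S -> S)
  (HS : inhabited S) (HG : inhabited G)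
  (Hag : is_GammaAGss op) (Hir : intra_regular op)
  (A : S -> Prop) (HA : exists a, A a) :
  is_Gamma12_ideal op A <->
  (set_eq (gprod op (gprod op A fullset) (gprod op A A)) A /\
   set_eq (gprod op A A) A).
Proof.
  destruct Hag as [H1 H2].
  split.
  - intros [_ [HAA H12]].
    split; split; try assumption.
    + intros a Ha. destruct (key_rep S G op H1 H2 Hir a) as [s [d [c [e E]]]].
      exists (op a d s), c, (op a e a). split; [|split; [|exact E]].
      * exists a, d, s. repeat split; auto.
      * exists a, e, a. auto.
    + intros a Ha. destruct (key_rep S G op H1 H2 Hir a) as [s [d [c [e E]]]].
      pose proof (key_AA S G op H1 H2 a s d c e E) as E2.
      exists (op (op a e (op s d s)) d (op a c (op a e a))), c, a.
      split; [|split; [exact Ha|exact E2]].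
      apply H12. exists (op a e (op s d s)), d, (op a c (op a e a)).
      split; [exists a, e, (op s d s); repeat split; auto|].
      split; [|reflexivity].
      exists a, c, (op a e a). split; [exact Ha|split; [|reflexivity]].
      apply HAA. exists a, e, a. auto.
  - intros [[Hs1 _] [Hs2 _]]. split; [exact HA|split; assumption].
Qed.
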